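(* Consider the execution of Greedy Dual on any MPMD or MBPMD instance. At every time $\tau$, the values $(y_S(\tau))_S$ form a feasible solution of the dual program for the requests that have arrived by time $\tau$. That is, $y_S(\tau)\ge 0$ for all $S$, and for every edge $e$ between two requests that have arrived by time $\tau$, $\sum_{S:\,e\in\delta(S)} y_S(\tau)\le\mathrm{cost}(e)$.
   Context: Problem (MPMD / MBPMD). Let $(\mathcal{X},\mathrm{dist})$ be a metric space. An instance consists of $2m$ requests $u_1,\dots,u_{2m}$. Each request $u$ is a triple $(\mathrm{pos}(u),\mathrm{atime}(u),\mathrm{sgn}(u))$, where $\mathrm{pos}(u)\in\mathcal{X}$ is its location and $\mathrm{atime}(u)\ge0$ is its arrival time, with arrival times nondecreasing. In MPMD, $\mathrm{sgn}(u)=0$ for all requests. In MBPMD, exactly $m$ requests have sign $+1$ and $m$ have sign $-1$. At time $\tau$, an algorithm may match two arrived, unmatched requests $u,v$ with $\mathrm{sgn}(u)=-\mathrm{sgn}(v)$, at cost $\mathrm{dist}(\mathrm{pos}(u),\mathrm{pos}(v))$ (connection cost) plus $(\tau-\mathrm{atime}(u))+(\tau-\mathrm{atime}(v))$ (waiting costs). All requests must eventually be matched. Notation. Edges are unordered pairs $\{u,v\}$ of distinct requests with $\mathrm{sgn}(u)=-\mathrm{sgn}(v)$. For a set $S$ of requests, $\delta(S)$ is the set of edges with exactly one endpoint in $S$. In MPMD, $\mathrm{sur}(S)=|S|\bmod 2$; in MBPMD, $\mathrm{sur}(S)=|\sum_{u\in S}\mathrm{sgn}(u)|$. For an edge $e=(u,v)$,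 $\mathrm{cost}(e)=\mathrm{dist}(\mathrm{pos}(u),\mathrm{pos}(v))+|\mathrm{atime}(u)-\mathrm{atime}(v)|$. Algorithm Greedy Dual (GD). GD maintains a dual variable $y_S\ge0$ for every set $S$ of already-arrived requests; $y_S(\tau)$ denotes its value at time $\tau$. It also maintains a partition of the arrived requests into active sets, with $\mathcal{A}(u)$ denoting the active set containing $u$. An active set is growing if it contains at least one free request, and non-growing otherwise. - When a request $u$ arrives, $\mathcal{A}(u)\leftarrow\{u\}$ becomes a new active set, and $y_S\leftarrow 0$ for every new set $S$ containing $u$. - Tight-constraint event: while there is an edge $e=(u,v)$ between arrived requests with $\mathcal{A}(u)\neq\mathcal{A}(v)$ and $\sum_{S:\,e\in\delta(S)}y_S=\mathrm{cost}(e)$, GD does the following. It merges the two sets: $S=\mathcal{A}(u)\cup\mathcal{A}(v)$ becomes active and $\mathcal{A}(w)\leftarrow S$ for all $w\in S$, while $\mathcal{A}(u)$ and $\mathcal{A}(v)$ become inactive. It marks the edge $e$. Then, while there are free $u',v'\in S$ with $\mathrm{sgn}(u')=-\mathrm{sgn}(v')$, it matches $u'$ with $v'$ at the current time. - At all other times, $y_S$ increases continuously at rate $1$ (the same rate as time) for every active growing set $S$; all other dual variables stay constant. *)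

(* Defs.v *)
From HB Require Import structures.
From mathcomp Require Import all_boot all_order all_algebra.
Set Implicit Arguments. Unset Strict Implicit. Unset Printing Implicit Defensive.
Import Order.TTheory GRing.Theory Num.Theory.
Local Open Scope ring_scope.

Definition is_metric (R : realFieldType) (X : Type) (dist : X -> X -> R) : Prop :=
  (forall x y, 0 <= dist x y) /\
  (forall x y, dist x y = 0 <-> x = y) /\
  (forall x y, dist x y = dist y x) /\
  (forall x y z, dist x z <= dist x y + dist y z).

(* Valid instance with 2m requests indexed by 'I_(2*m): arrival times are
   nonnegative and nondecreasing; signs are either all 0 (MPMD) or
   all +-1 with exactly m of sign +1 (MBPMD). *)
Definition valid_instance (R : realFieldType) (m : nat)
    (atime : 'I_(2 * m) -> R) (sgn : 'I_(2 * m) -> int) : Prop :=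
  (forall u, 0 <= atime u) /\
  (forall u v : 'I_(2 * m), (u <= v)%N -> atime u <= atime v) /\
  ((forall u, sgn u = 0) \/
   ((forall u, sgn u = 1 \/ sgn u = -1) /\ #|[set u | sgn u == 1]| = m)).

Record gd_state (R : realFieldType) (n : nat) := GDState {
  st_time : R;
  st_arr  : {set 'I_n};
  st_act  : 'I_n -> {set 'I_n};       (* A(u), meaningful for arrived u *)
  st_free : {set 'I_n};               (* arrived, still unmatched requests *)
  st_y    : {set 'I_n} -> R           (* dual variables (0 on sets not yet created) *)
}.

Section GD.
Variables (R : realFieldType) (X : Type) (dist : X -> X -> R) (n : nat)
          (pos : 'I_n -> X) (atime : 'I_n -> R) (sgn : 'I_n -> int).

Definition is_edge (u v : 'I_n) : bool := (u != v) && (sgn u == - sgn v).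

Definition cost (u v : 'I_n) : R := dist (pos u) (pos v) + `|atime u - atime v|.

Definition dual_load (arr : {set 'I_n}) (y : {set 'I_n} -> R) (u v : 'I_n) : R :=
  \sum_(S : {set 'I_n} | (S \subset arr) && ((u \in S) != (v \in S))) y S.

Definition growing (s : gd_state R n) (S : {set 'I_n}) : bool :=
  [exists w, (w \in st_arr s) && (st_act s w == S)] && (S :&: st_free s != set0).

Definition y_at (s : gd_state R n) (t : R) : {set 'I_n} -> R :=
  fun S => st_y s S + (if growing s S then t - st_time s else 0).

Definition tight_at (s : gd_state R n) (t : R) : Prop :=
  exists u v, [/\ u \in st_arr s, v \in st_arr s, is_edge u v,
    st_act s u != st_act s v &
    dual_load (st_arr s) (y_at s t) u v = cost u v].

Definition quiescent (s : gd_state R n) : Prop :=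
  forall u v, u \in st_arr s -> v \in st_arr s -> u \in st_free s -> v \in st_free s ->
    is_edge u v -> st_act s u = st_act s v -> False.

Inductive gd_reach : gd_state R n -> Prop :=
| gd_init : gd_reach (GDState 0 set0 (fun _ => set0) set0 (fun _ => 0))
| gd_arrive s u :
    gd_reach s -> quiescent s -> u \notin st_arr s -> st_time s = atime u ->
    gd_reach (GDState (st_time s) (u |: st_arr s)
                (fun w => if w == u then [set u] else st_act s w)
                (u |: st_free s) (st_y s))
| gd_merge s u v :
    gd_reach s -> quiescent s -> u \in st_arr s -> v \in st_arr s -> is_edge u v ->
    st_act s u != st_act s v ->
    dual_load (st_arr s) (st_y s) u v = cost u v ->
    let S := st_act s u :|: st_act s v in
    gd_reach (GDState (st_time s) (st_arr s)
                (fun w => if w \in S then S else st_act s w)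
                (st_free s) (st_y s))
| gd_match s u v :
    gd_reach s -> u \in st_arr s -> v \in st_arr s -> u \in st_free s -> v \in st_free s ->
    is_edge u v -> st_act s u = st_act s v ->
    gd_reach (GDState (st_time s) (st_arr s) (st_act s)
                (st_free s :\ u :\ v) (st_y s))
| gd_grow s t :
    gd_reach s -> quiescent s -> st_time s < t ->
    (forall u, u \notin st_arr s -> t <= atime u) ->
    (forall t', st_time s <= t' -> t' < t -> ~ tight_at s t') ->
    gd_reach (GDState t (st_arr s) (st_act s) (st_free s) (y_at s t)).

End GD.

(* Main.v *)
Require Import Defs.
From HB Require Import structures.
From mathcomp Require Import all_boot all_order all_algebra.
Import Order.TTheory GRing.Theory Num.Theory.
Local Open Scope ring_scope.

Section Proofs.
Variables (R : realFieldType) (X : Type) (dist : X -> X -> R) (n : nat)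
          (pos : 'I_n -> X) (atime : 'I_n -> R) (sgn : 'I_n -> int).
Hypothesis dist_ge0 : forall x y, 0 <= dist x y.

Definition inv (s : gd_state R n) : Prop :=
 [/\ (forall w x, w \in st_arr s ->
        (x \in st_act s w) = (x \in st_arr s) && (st_act s x == st_act s w)),
     (forall S : {set 'I_n}, ~~ (S \subset st_arr s) -> st_y s S = 0),
     (forall S : {set 'I_n}, 0 <= st_y s S),
     (forall v, v \in st_arr s -> \sum_(S : {set 'I_n} | v \in S) st_y s S <= st_time s - atime v) &
     (forall u v, u \in st_arr s -> v \in st_arr s -> is_edge sgn u v ->
        dual_load (st_arr s) (st_y s) u v <= cost dist pos atime u v)].

Lemma dl_full (A : {set 'I_n}) (y : {set 'I_n} -> R) (a b : 'I_n) :
  (forall S : {set 'I_n}, ~~ (S \subset A) -> y S = 0) ->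
  dual_load A y a b = \sum_(S : {set 'I_n} | (a \in S) != (b \in S)) y S.
Proof.
move=> H; symmetry; rewrite (bigID (fun S : {set 'I_n} => S \subset A)) /=.
rewrite [X in _ + X = _]big1 ?addr0; last by move=> S /andP[_ /H].
by apply: eq_bigl => S; rewrite andbC.
Qed.

Lemma dl_grow (s : gd_state R n) t (A : {set 'I_n}) (a b : 'I_n) :
  dual_load A (y_at s t) a b = dual_load A (st_y s) a b +
    (t - st_time s) * \sum_(S : {set 'I_n} | (S \subset A) && ((a \in S) != (b \in S)))
       (if growing s S then 1 else 0).
Proof.
rewrite /dual_load /y_at big_split /= mulr_sumr; congr (_ + _).
by apply: eq_bigr => S _; case: (growing s S); rewrite ?mulr1 ?mulr0.
Qed.

Lemma affine_bound (L0 c C t0 t : R) : L0 <= C -> 0 <= c -> t0 < t ->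
  (forall t', t0 <= t' -> t' < t -> L0 + (t' - t0) * c != C) ->
  L0 + (t - t0) * c <= C.
Proof.
move=> h1 hc ht hn; rewrite leNgt; apply/negP => hlt.
have L0lt : L0 < C.
  by rewrite lt_neqAle h1 andbT; have := hn t0 (lexx _) ht; rewrite subrr mul0r addr0.
have cpos : 0 < c.
  rewrite lt_neqAle hc andbT; apply/eqP => c0; move: hlt.
  by rewrite -c0 mulr0 addr0 => /(lt_trans L0lt); rewrite ltxx.
have cn0 : c != 0 by rewrite gt_eqF.
have := hn (t0 + (C - L0) / c).
have E : t0 + (C - L0) / c - t0 = (C - L0) / c by rewrite addrC addKr.
rewrite E divfK // (addrC L0) subrK eqxx.
have h0 : 0 <= (C - L0) / c by rewrite divr_ge0 ?subr_ge0 // ltW.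
rewrite lerDl h0 => /(_ isT).
have h2 : t0 + (C - L0) / c < t.
  rewrite -ltrBrDl ltr_pdivrMr // ltrBlDl //.
by move=> /(_ h2).
Qed.

Lemma new_bound (A : {set 'I_n}) (y : {set 'I_n} -> R) (u0 b : 'I_n) : u0 \notin A ->
  (forall S : {set 'I_n}, ~~ (S \subset A) -> y S = 0) -> (forall S : {set 'I_n}, 0 <= y S) ->
  \sum_(S : {set 'I_n} | (u0 \in S) != (b \in S)) y S <= \sum_(S : {set 'I_n} | b \in S) y S.
Proof.
move=> hu H hy; rewrite [X in X <= _]big_mkcond [X in _ <= X]big_mkcond /=.
apply: ler_sum => S _; case hS: (u0 \in S).
  have -> : y S = 0.
    by apply: H; apply/negP => /subsetP/(_ _ hS); rewrite (negbTE hu).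
  by case: ifP; case: ifP.
by case: (b \in S).
Qed.

Lemma inv_reach s : gd_reach dist pos atime sgn s -> inv s.
Proof.
elim=> {s}.
- split => //=.
  + by move=> w x; rewrite in_set0.
  + by move=> v; rewrite in_set0.
  + by move=> u v; rewrite in_set0.
- move=> s u0 _ [P I2 I3 I4 I5] _ hu0 Ht; split => /=.
  + move=> w x /setU1P[->|hw].
      rewrite eqxx in_set1; case: (eqVneq x u0) => [->|hx]; first by rewrite eqxx setU11.
      rewrite in_setU1 (negbTE hx) /=.
      case hxa: (x \in st_arr s) => //=; apply/esym/negP => /eqP E.
      by move: (P x x hxa); rewrite eqxx hxa E in_set1 (negbTE hx).
    have wu : (w == u0) = false by apply/negP => /eqP E; rewrite -E hw in hu0.
    rewrite wu in_setU1; case: (eqVneq x u0) => [->|hx] /=.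
      have h1 : (u0 \in st_act s w) = false.
        by apply/negP => hin; move: (P w u0 hw); rewrite hin (negbTE hu0).
      rewrite h1; apply/esym/negP => /eqP E; move: (P w w hw).
      by rewrite eqxx hw -E in_set1 wu.
    by apply: P.
  + move=> S hS; apply: I2; apply/negP => hs; move/negP: hS; apply.
    by apply: (subset_trans hs); apply: subsetUr.
  + exact: I3.
  + move=> v /setU1P[->|hv].
      rewrite big1 -?Ht ?subrr // => S hS; apply: I2.
      by apply/negP => /subsetP/(_ _ hS); rewrite (negbTE hu0).
    by apply: I4.
  + have I2' : forall S : {set 'I_n}, ~~ (S \subset st_arr s) -> st_y s S = 0 := I2.
    have cb : forall a b, b \in st_arr s ->
        \sum_(S : {set 'I_n} | (a \in S) != (b \in S)) st_y s S <= atime a - atime b ->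
        \sum_(S : {set 'I_n} | (a \in S) != (b \in S)) st_y s S <= cost dist pos atime a b.
      move=> a b _ h; apply: (le_trans h); rewrite /cost.
      by apply: (le_trans (ler_norm _)); rewrite lerDr.
    move=> a b /setU1P[->|ha] /setU1P[->|hb] he.
    * by move: he; rewrite /is_edge eqxx.
    * rewrite dl_full; last first.
        move=> S hS; apply: I2; apply/negP => hs; move/negP: hS; apply.
        by apply: (subset_trans hs); apply: subsetUr.
      apply: (le_trans (@new_bound _ _ u0 b hu0 I2 I3)).
      by apply: (le_trans (I4 b hb)); rewrite Ht /cost (le_trans (ler_norm _)) // lerDr.
    * rewrite dl_full; last first.
        move=> S hS; apply: I2; apply/negP => hs; move/negP: hS; apply.
        by apply: (subset_trans hs); apply: subsetUr.
      under eq_bigl => S do rewrite eq_sym.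
      apply: (le_trans (@new_bound _ _ u0 a hu0 I2 I3)).
      apply: (le_trans (I4 a ha)); rewrite Ht /cost distrC.
      by rewrite (le_trans (ler_norm _)) // lerDr.
    * rewrite dl_full; last first.
        move=> S hS; apply: I2; apply/negP => hs; move/negP: hS; apply.
        by apply: (subset_trans hs); apply: subsetUr.
      by rewrite -(@dl_full _ _ a b I2); apply: I5.
- move=> s u v _ [P I2 I3 I4 I5] _ hu hv he hne hdl /=; split => //=.
  set S := st_act s u :|: st_act s v.
  have sub : forall w x, w \in st_arr s -> x \in st_act s w -> x \in st_arr s.
    by move=> w x hw hx; move: (P w x hw); rewrite hx => /esym/andP[].
  have same : forall w x, w \in st_arr s -> x \in st_act s w -> st_act s x = st_act s w.
    by move=> w x hw hx; move: (P w x hw); rewrite hx => /esym/andP[_ /eqP].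
  have self : forall w, w \in st_arr s -> w \in st_act s w.
    by move=> w hw; rewrite P // hw eqxx.
  have Ssub : forall x, x \in S -> x \in st_arr s.
    by move=> x /setUP[] hx; [apply: (sub u) | apply: (sub v)].
  move=> w x hw; case hwS: (w \in S); case hxS: (x \in S).
  + by rewrite (Ssub _ hxS) eqxx.
  + case hxa: (x \in st_arr s); rewrite /= ?andbF //.
    apply/esym/negP => /eqP E; move: hxS; by rewrite -E self.
  + have hSw : (S == st_act s w) = false.
      by apply/negP => /eqP E; move: hwS; rewrite E self.
    rewrite hSw andbF; apply/negP => hx; have := same w x hw hx.
    case/setUP: (idP hxS) => hxu.
      by rewrite (same u x hu hxu) => E; move: hwS; rewrite /S E in_setU self.
    by rewrite (same v x hv hxu) => E; move: hwS; rewrite /S E in_setU self ?orbT.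
  + by apply: P.
- move=> s u v _ [P I2 I3 I4 I5] *; by split.
- move=> s t _ [P I2 I3 I4 I5] _ hlt _ hnt /=.
  have self : forall w, w \in st_arr s -> w \in st_act s w.
    by move=> w hw; rewrite P // hw eqxx.
  have gr : forall (S : {set 'I_n}) v, v \in st_arr s -> growing s S -> v \in S -> S = st_act s v.
    move=> S v hv /andP[/existsP[w /andP[hw /eqP hwS]] _] hvS.
    by move: (P w v hw); rewrite hwS hvS => /esym/andP[_ /eqP].
  have grsub : forall S : {set 'I_n}, growing s S -> S \subset st_arr s.
    move=> S /andP[/existsP[w /andP[hw /eqP hwS]] _]; apply/subsetP => x.
    by rewrite -hwS P // => /andP[].
  have dpos : 0 < t - st_time s by rewrite subr_gt0.
  split => /=.
  + exact: P.
  + move=> S hS; rewrite /y_at I2 // add0r; case: ifP => // /grsub hs.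
    by rewrite hs in hS.
  + move=> S; rewrite /y_at; apply: addr_ge0 => //; case: ifP => // _; exact: ltW.
  + move=> v hv; rewrite /y_at big_split /=.
    have -> : t - atime v = (st_time s - atime v) + (t - st_time s).
      by rewrite [RHS]addrC addrA subrK.
    apply: lerD; first exact: I4.
    rewrite (bigD1 (st_act s v)) ?self //= big1 ?addr0.
      by case: ifP => // _; exact: ltW.
    move=> S /andP[hvS hne]; case: ifP => // g.
    by rewrite (gr S v hv g hvS) eqxx in hne.
  + move=> a b ha hb he; rewrite dl_grow.
    case: (eqVneq (st_act s a) (st_act s b)) => hab.
      rewrite big1 ?mulr0 ?addr0; first exact: I5.
      move=> S /andP[_ hS]; case: ifP => // g.
      move: hS; case haS: (a \in S); case hbS: (b \in S) => //= _.
        by move: hbS; rewrite (gr S a ha g haS) hab self.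
      by move: haS; rewrite (gr S b hb g hbS) -hab self.
    apply: affine_bound => //; first exact: I5.
      by apply: sumr_ge0 => S _; case: ifP.
    move=> t' h1 h2; apply/eqP => E; apply: (hnt t' h1 h2).
    by exists a, b; split => //; rewrite dl_grow.
Qed.

End Proofs.

Theorem lemma3 (R : realFieldType) (X : Type) (dist : X -> X -> R) (m : nat)
    (pos : 'I_(2 * m) -> X) (atime : 'I_(2 * m) -> R) (sgn : 'I_(2 * m) -> int) :
  is_metric dist -> valid_instance atime sgn ->
  forall s : gd_state R (2 * m), gd_reach dist pos atime sgn s ->
    (forall S : {set 'I_(2 * m)}, S \subset st_arr s -> 0 <= st_y s S) /\
    (forall u v, u \in st_arr s -> v \in st_arr s -> is_edge sgn u v ->
       dual_load (st_arr s) (st_y s) u v <= cost dist pos atime u v).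
Proof.
move=> [d0 _] _ s hr.
have [_ _ I3 _ I5] := @inv_reach _ _ dist _ pos atime sgn d0 s hr.
by split => // S _; apply: I3.
Qed.
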